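(* Let $\mathbb{K}$ be a field and let $A=(a_{ij})\in UU_n(\mathbb{K})$ (the group of $n\times n$ upper triangular unipotent matrices over $\mathbb{K}$) have all super-diagonal entries $a_{i,i+1}$ nonzero. If $B=(b_{ij})\in UU_n(\mathbb{K})$ commutes with $A$, then the first-row entries $b_{12},\dots,b_{1n}$ of $B$ determine all the remaining entries of $B$. If $\mathbb{K}=\mathbb{F}_q$ is a finite field with $q$ elements, then the centralizer of $A$ in $UU_n(\mathbb{F}_q)$ has cardinality $q^{n-1}$. *)

(* Defs.v *)
From HB Require Import structures.
From mathcomp Require Import all_boot all_order all_algebra all_field.
Set Implicit Arguments. Unset Strict Implicit. Unset Printing Implicit Defensive.
Import GRing.Theory.
Local Open Scope ring_scope.

Definition unitriangular (R : nzRingType) (n : nat) (A : 'M[R]_n) : Prop :=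
  (forall i j : 'I_n, (j < i)%N -> A i j = 0) /\ (forall i : 'I_n, A i i = 1).

Definition superdiag_nonzero (R : nzRingType) (n : nat) (A : 'M[R]_n) : Prop :=
  forall i j : 'I_n, nat_of_ord j = (nat_of_ord i).+1 -> A i j != 0.

Definition UU_centralizer (F : finFieldType) (n : nat) (A : 'M[F]_n)
  : {set 'M[F]_n} :=
  [set B : 'M[F]_n | [forall i : 'I_n, forall j : 'I_n, ((j < i)%N ==> (B i j == 0))]
     && [forall i : 'I_n, B i i == 1] && (A *m B == B *m A)].

(* Main.v *)
Require Import Defs.
From HB Require Import structures.
From mathcomp Require Import all_boot all_order all_algebra all_field.
From mathcomp Require Import zify.
Local Open Scope ring_scope.
Import GRing.Theory.

Lemma part1 (K : fieldType) (n : nat) (A B B' : 'M[K]_n) :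
  unitriangular A -> superdiag_nonzero A ->
  unitriangular B -> A *m B = B *m A ->
  unitriangular B' -> A *m B' = B' *m A ->
  (forall j : 'I_n, forall i : 'I_n, nat_of_ord i = 0%N -> B i j = B' i j) ->
  B = B'.
Proof.
move=> [Alow Adiag] Asup _ AB _ AB' first.
pose D := B - B'.
have AD : A *m D = D *m A by rewrite /D mulmxBr mulmxBl AB AB'.
have D0 : forall j i : 'I_n, nat_of_ord i = 0%N -> D i j = 0.
  by move=> j i i0; rewrite /D !mxE first // subrr.
suff col : forall t (j : 'I_n), (j < t)%N -> forall i, D i j = 0.
  apply/eqP; rewrite -subr_eq0; apply/eqP/matrixP => i j.
  by rewrite [RHS]mxE; apply: (col n).
elim=> [|t IHt] j // jt.
have colj : forall l : 'I_n, (l < j)%N -> forall i, D i l = 0.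
  by move=> l lj; apply: IHt; lia.
suff row : forall s (k : 'I_n), (n <= k + s)%N -> D k j = 0.
  by move=> i; apply: (row n); lia.
elim=> [|s IHs] k ks.
  have := ltn_ord k; lia.
case k0: (nat_of_ord k) => [|i]; first by apply: D0.
have iltn : (i < n)%N by have := ltn_ord k; lia.
pose io := Ordinal iltn.
have hi : forall l : 'I_n, (i.+1 < l)%N -> D l j = 0.
  by move=> l hl; apply: IHs; lia.
have e1 : (A *m D) io j = D io j + A io k * D k j.
  rewrite mxE (bigD1 io) //= (bigD1 k) /=; last first.
    by rewrite -val_eqE /= k0; lia.
  rewrite Adiag mul1r big1 ?addr0 // => l /andP[l1 l2].
  have [lt|ge] := ltnP l i.
    by rewrite Alow // mul0r.
  rewrite hi ?mulr0 //.
  move: l1 l2; rewrite -!val_eqE /= k0; lia.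
have e2 : (D *m A) io j = D io j.
  rewrite mxE (bigD1 j) //= big1 ?addr0 => [|l lj]; first by rewrite Adiag mulr1.
  have [lt|ge] := ltnP l j.
    by rewrite colj // mul0r.
  rewrite Alow ?mulr0 //.
  move: lj; rewrite -val_eqE /=; lia.
have : A io k * D k j = 0.
  by apply: (addrI (D io j)); rewrite -e1 AD e2 addr0.
move/eqP; rewrite mulf_eq0 => /orP[|/eqP //].
by move/eqP => h; move: (Asup io k k0); rewrite h eqxx.
Qed.

Lemma Npow_low (F : fieldType) m (N : 'M[F]_m.+1)
  (hN : forall i j : 'I_m.+1, (j <= i)%N -> N i j = 0) :
  forall k (i j : 'I_m.+1), (j < i + k)%N -> (N ^+ k) i j = 0.
Proof.
elim=> [|k IH] i j h.
  rewrite expr0 -idmxE mxE.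
  have/negbTE-> : i != j by apply/eqP=> e; rewrite e addn0 ltnn in h.
  by [].
rewrite exprS -mulmxE mxE big1 // => l _.
case: (leqP l i) => hl; first by rewrite hN // mul0r.
rewrite IH ?mulr0 //; lia.
Qed.

Lemma Npow_diag (F : fieldType) m (N : 'M[F]_m.+1)
  (hN : forall i j : 'I_m.+1, (j <= i)%N -> N i j = 0)
  (hsup : forall i j : 'I_m.+1, nat_of_ord j = (nat_of_ord i).+1 -> N i j != 0) :
  forall k (i j : 'I_m.+1), nat_of_ord j = (i + k)%N -> (N ^+ k) i j != 0.
Proof.
elim=> [|k IH] i j h.
  rewrite expr0 -idmxE mxE.
  have -> : i == j by apply/eqP/val_inj; rewrite /= h addn0.
  by rewrite oner_neq0.
have h' : (i.+1 < m.+1)%N by have := ltn_ord j; lia.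
pose io := Ordinal h'.
rewrite exprS -mulmxE mxE (bigD1 io) //= big1 => [|l hl].
  by rewrite addr0 mulf_neq0 // ?hsup // IH //= h; lia.
case: (leqP l i) => hli; first by rewrite hN // mul0r.
rewrite (@Npow_low _ _ _ hN) ?mulr0 //.
move: hl; rewrite -val_eqE /=; lia.
Qed.

Definition polyN (F : fieldType) m (N : 'M[F]_m.+1) (c : {ffun 'I_m -> F})
  : 'M[F]_m.+1 := 1 + \sum_(k < m) c k *: N ^+ k.+1.

Lemma centralizer_mem (F : finFieldType) n (A B : 'M[F]_n) :
  B \in UU_centralizer A -> unitriangular B /\ A *m B = B *m A.
Proof.
rewrite inE => /andP[/andP[/forallP h1 /forallP h2] /eqP h3].
split=> //; split=> [i j ji|i]; last by apply/eqP.
by move: (h1 i) => /forallP /(_ j) /implyP /(_ ji) /eqP.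
Qed.

Lemma part2 (F : finFieldType) (n : nat) (A : 'M[F]_n) :
  unitriangular A -> superdiag_nonzero A ->
  #|UU_centralizer A| = (#|F| ^ (n - 1))%N.
Proof.
case: n A => [|m] A Aut Asup.
  have -> : UU_centralizer A = setT.
    apply/setP => B; rewrite !inE.
    apply/andP; split; first (apply/andP; split).
    - by apply/forallP => -[].
    - by apply/forallP => -[].
    - by rewrite !thinmx0.
  by rewrite cardsT card_mx.
have [Alow Adiag] := Aut.
pose N := A - 1.
have hN : forall i j : 'I_m.+1, (j <= i)%N -> N i j = 0.
  move=> i j ji; rewrite /N !mxE.
  case: (ltnP j i) => h.
    have/negbTE-> : i != j by apply/eqP=> e; rewrite e ltnn in h.
    by rewrite Alow // subr0.
  have e : i = j by apply/val_inj; apply/eqP; rewrite eqn_leq ji h.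
  by rewrite e eqxx Adiag subrr.
have hsup : forall i j : 'I_m.+1, nat_of_ord j = (nat_of_ord i).+1 -> N i j != 0.
  move=> i j h; rewrite /N !mxE.
  have/negbTE-> : i != j by apply/eqP=> e; rewrite e in h; lia.
  by rewrite subr0 Asup.
have AN : A = 1 + N by rewrite /N addrC subrK.
clearbody N.
apply/eqP; rewrite eqn_leq; apply/andP; split.
- pose r (B : 'M[F]_m.+1) := [ffun k : 'I_m => B ord0 (lift ord0 k)].
  rewrite -(card_in_imset (f := r)); last first.
    move=> B B' /centralizer_mem [uB cB] /centralizer_mem [uB' cB'] rB.
    apply: (@part1 _ _ A B B' Aut Asup uB cB uB' cB') => j i i0.
    have -> : i = ord0 by apply/val_inj.
    case: (unliftP ord0 j) => [k ->|->].
      by move/ffunP: rB => /(_ k); rewrite !ffunE.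
    by rewrite uB.2 uB'.2.
  apply: leq_trans (max_card _) _.
  by rewrite card_ffun card_ord subn1.
- have inj : injective (@polyN _ _ N).
    move=> c c' /addrI /eqP; rewrite -subr_eq0 -sumrB => /eqP H.
    suff: forall t (k : 'I_m), (k < t)%N -> c k = c' k.
      by move=> h; apply/ffunP => k; apply: (h m).
    elim=> [|t IH] // k kt.
    have := congr1 (fun M : 'M[F]_m.+1 => M ord0 (lift ord0 k)) H.
    rewrite summxE [RHS]mxE (bigD1 k) //= big1 => [|l hl].
      rewrite addr0 !mxE -mulrBl => /eqP; rewrite mulf_eq0 => /orP[|].
        by rewrite subr_eq0 => /eqP.
      move=> /eqP h; exfalso; move: h; apply/eqP.
      by apply: (@Npow_diag _ _ N) => //=.
    rewrite !mxE.
    case: (ltnP l k) => hl'.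
      by rewrite IH ?subrr ?mul0r //; lia.
    rewrite (@Npow_low _ _ _ hN) ?mulr0 //=.
    by rewrite subrr.
  rewrite /bump leq0n add1n; move: hl; rewrite -val_eqE /=; lia.
  have -> : (#|F| ^ (m.+1 - 1))%N = #|{ffun 'I_m -> F}| by rewrite card_ffun card_ord subn1.
  rewrite -cardsT -(card_imset _ inj).
  apply: subset_leq_card; apply/subsetP => _ /imsetP[c _ ->].
  rewrite inE; apply/andP; split; first (apply/andP; split).
  + apply/forallP => i; apply/forallP => j; apply/implyP => ji.
    rewrite /polyN !mxE summxE big1 => [|k _].
      have/negbTE-> : i != j by apply/eqP=> e; rewrite e ltnn in ji.
      by rewrite addr0.
    by rewrite mxE (@Npow_low _ _ _ hN) ?mulr0 //; lia.
  + apply/forallP => i; rewrite /polyN !mxE summxE big1 => [|k _].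
      by rewrite eqxx addr0.
    by rewrite mxE (@Npow_low _ _ _ hN) ?mulr0 //; lia.
  + apply/eqP; rewrite mulmxE AN /polyN.
    have NS : N * (\sum_(k < m) c k *: N ^+ k.+1) = (\sum_(k < m) c k *: N ^+ k.+1) * N.
      rewrite mulr_sumr mulr_suml; apply: eq_bigr => k _.
      by rewrite -scalerAr -scalerAl -exprS exprSr.
    rewrite !mulrDl !mulrDr !mul1r !mulr1 NS; exact: addrACA.
Qed.

Theorem lemma11p2 :
  (forall (K : fieldType) (n : nat) (A B B' : 'M[K]_n),
      unitriangular A -> superdiag_nonzero A ->
      unitriangular B -> A *m B = B *m A ->
      unitriangular B' -> A *m B' = B' *m A ->
      (forall j : 'I_n, forall i : 'I_n, nat_of_ord i = 0%N -> B i j = B' i j) ->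
      B = B')
  /\
  (forall (F : finFieldType) (n : nat) (A : 'M[F]_n),
      unitriangular A -> superdiag_nonzero A ->
      #|UU_centralizer A| = (#|F| ^ (n - 1))%N).
Proof.
split; [exact: part1 | exact: part2].
Qed.
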